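(* For each $n\geq2$, the pseudovariety $\llbracket N_n\rrbracket$ is join irreducible and $\operatorname{Excl}(N_n)=\llbracket x^{\omega+n-1}\approx x^{n-1}\rrbracket$.
   Context: $N_n=\langle a\mid a^n=0\rangle=\{0,a,\dots,a^{n-1}\}$ is the monogenic nilpotent semigroup of order $n$. A pseudovariety is a class of finite semigroups closed under finite direct products, subsemigroups and homomorphic images; $\llbracket S\rrbracket$ is the pseudovariety generated by $S$ and $\llbracket\Sigma\rrbracket$ the pseudovariety defined by pseudoidentities $\Sigma$; $x^\omega$ is the idempotent power and $x^{\omega+k}=x^\omega x^k$. A pseudovariety $\mathbf{V}$ is join irreducible if for every set $\mathscr{X}$ of pseudovarieties, $\mathbf{V}\subseteq\bigvee\mathscr{X}$ implies $\mathbf{V}\subseteq\mathbf{X}$ for some $\mathbf{X}\in\mathscr{X}$; $\operatorname{Excl}(S)$ is the class of finite semigroups $T$ with $S\notin\llbracket T\rrbracket$. *)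

(* Defs.v *)
From HB Require Import structures.
From mathcomp Require Import all_boot zify.
Set Implicit Arguments.
Unset Strict Implicit.
Unset Printing Implicit Defensive.

Record fsg : Type := FSG {
  fsg_car :> finType;
  fsg_op : fsg_car -> fsg_car -> fsg_car;
  fsg_assoc : associative fsg_op }.

Definition hom (S T : fsg) (f : S -> T) : Prop :=
  forall x y : S, f (fsg_op x y) = fsg_op (f x) (f y).

(* positive powers: spow x k = x^k for k >= 1 *)
Definition spow (S : fsg) (x : S) (k : nat) : S := iter k.-1 (fsg_op x) x.

Definition prod_op (S T : fsg) (p q : (S * T)%type) : (S * T)%type :=
  (fsg_op p.1 q.1, fsg_op p.2 q.2).
Lemma prod_op_assoc (S T : fsg) : associative (@prod_op S T).
Proof. by move=> [a b] [c d] [e f]; rewrite /prod_op /= !fsg_assoc. Qed.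
Definition prod_fsg (S T : fsg) : fsg := @FSG (S * T)%type _ (@prod_op_assoc S T).

(* the trivial semigroup (empty direct product) *)
Definition unit_op (x y : unit) : unit := tt.
Lemma unit_op_assoc : associative unit_op. Proof. by []. Qed.
Definition unit_fsg : fsg := @FSG unit _ unit_op_assoc.

Definition class := fsg -> Prop.
Definition subclass (V W : class) : Prop := forall S, V S -> W S.

(* pseudovariety: closed under finite direct products (nullary and binary),
   subsemigroups (injective homomorphisms) and homomorphic images
   (surjective homomorphisms). *)
Definition pseudovariety (V : class) : Prop :=
  [/\ V unit_fsg,
      (forall S T : fsg, V S -> V T -> V (prod_fsg S T)),
      (forall (S T : fsg) (f : T -> S), hom f -> injective f -> V S -> V T) &
      (forall (S T : fsg) (f : S -> T), hom f -> (forall y, exists x, f x = y) ->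
          V S -> V T)].

Definition gen (S : fsg) : class :=
  fun T => forall V, pseudovariety V -> V S -> V T.

Definition join (X : class -> Prop) : class :=
  fun T => forall V, pseudovariety V ->
    (forall W, X W -> subclass W V) -> V T.

Definition join_irreducible (V : class) : Prop :=
  forall X : class -> Prop, (forall W, X W -> pseudovariety W) ->
    subclass V (join X) -> exists2 W, X W & subclass V W.

Definition Excl (S : fsg) : class := fun T => ~ gen T S.

(* [[ x^{w+k} = x^k ]] : x^w is the (unique) idempotent positive power of x *)
Definition omega_plus_eq (k : nat) : class :=
  fun T => forall x e : T, (exists2 m, 0 < m & e = spow x m) ->
    fsg_op e e = e -> fsg_op e (spow x k) = spow x k.

(* N_n = <a | a^n = 0> = {a, a^2, ..., a^{n-1}, 0}; the element i : 'I_n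
   represents a^(i+1), and i = n-1 represents a^n = 0. *)
Lemma N_op_lt n (i : 'I_n) (m : nat) : minn m n.-1 < n.
Proof. have := ltn_ord i; lia. Qed.
Definition N_op n (i j : 'I_n) : 'I_n := Ordinal (N_op_lt i (i + j).+1).
Lemma N_op_assoc n : associative (@N_op n).
Proof. move=> i j k; apply: val_inj => /=; lia. Qed.
Definition N (n : nat) : fsg := @FSG 'I_n _ (@N_op_assoc n).

(* Main.v *)
Require Import Defs.
From mathcomp Require Import all_boot.
From mathcomp Require Import zify.
From Stdlib Require Import Classical.

Set Implicit Arguments.
Unset Strict Implicit.
Unset Printing Implicit Defensive.

Definition pw (S : fsg) (x : S) (k : nat) : S := iter k (fsg_op x) x.

Lemma pwD (S : fsg) (x : S) a b : fsg_op (pw x a) (pw x b) = pw x (a + b).+1.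
Proof.
elim: a => [|a IH] //=.
by rewrite -fsg_assoc IH.
Qed.

Lemma pw_pw (S : fsg) (x : S) a b : pw (pw x a) b = pw x ((a.+1) * (b.+1)).-1.
Proof.
elim: b => [|b IH]; first by rewrite muln1.
rewrite -[pw (pw x a) b.+1]/(fsg_op (pw x a) (pw (pw x a) b)) IH pwD; congr (pw x _); nia.
Qed.

Lemma pw_idem (S : fsg) (e : S) b : fsg_op e e = e -> pw e b = e.
Proof. move=> H; elim: b => [|b IH] //=; by rewrite -/(pw e b) IH. Qed.

Lemma pw_period (S : fsg) (x : S) j d : pw x j = pw x (j + d) ->
  forall l t, j <= l -> pw x l = pw x (l + t * d).
Proof.
move=> H.
have H1 : forall s, pw x (j + s) = pw x (j + s + d).
  case=> [|s]; first by rewrite addn0.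
  have -> : j + s.+1 + d = (j + d + s).+1 by lia.
  have -> : j + s.+1 = (j + s).+1 by lia.
  by rewrite -[pw x (j+s).+1]pwD -[pw x (j+d+s).+1]pwD H.
move=> l t jl; elim: t => [|t IH]; first by rewrite addn0.
have -> : l + t.+1 * d = (j + (l + t * d - j)) + d by nia.
by rewrite -H1 subnKC ?IH //; lia.
Qed.

Lemma pw_pigeon (S : fsg) (x : S) :
  exists i d, [/\ 0 < d, i + d <= #|S| & pw x i = pw x (i + d)].
Proof.
pose f := fun c : 'I_#|S|.+1 => pw x c.
have : ~~ injectiveb f.
  apply/injectiveP => inj; have := leq_card f inj; by rewrite card_ord ltnn.
case/injectivePn => a [b neq E].
case: (ltngtP a b) => ab.
- exists a, (b - a); split; [lia | have := ltn_ord b; lia |].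
  by rewrite subnKC ?(ltnW ab).
- exists b, (a - b); split; [lia | have := ltn_ord a; lia |].
  by rewrite subnKC ?(ltnW ab).
- by move: neq; rewrite (val_inj ab) eqxx.
Qed.

Lemma pw_reduce (S : fsg) (x : S) i d : 0 < d -> pw x i = pw x (i + d) ->
  forall c, exists2 c', c' < i + d & pw x c = pw x c'.
Proof.
move=> d0 H c; move: {2}c.+1 (ltnSn c) => N; elim: N c => [|N IH] c cN //.
case: (ltnP c (i + d)) => ci; first by exists c.
have [c' lt E] := IH (c - d) ltac:(lia).
exists c' => //; rewrite -E.
have := @pw_period _ x i d H (c - d) 1 ltac:(lia).
by rewrite mul1n subnK //; lia.
Qed.

Lemma pw_idem_exists (S : fsg) (x : S) : exists a, fsg_op (pw x a) (pw x a) = pw x a.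
Proof.
have [i [d [d0 _ H]]] := pw_pigeon x.
exists (i.+1 * d).-1; rewrite pwD.
transitivity (pw x ((i.+1 * d).-1 + i.+1 * d)); first by congr (pw x _); nia.
symmetry; apply: (pw_period H); nia.
Qed.

Lemma idem_pow_eq (S : fsg) (y : S) a b :
  fsg_op (pw y a) (pw y a) = pw y a -> fsg_op (pw y b) (pw y b) = pw y b ->
  pw y a = pw y b.
Proof.
move=> Ha Hb; have E1 := pw_idem b Ha; have E2 := pw_idem a Hb.
by rewrite -E1 -E2 !pw_pw mulnC.
Qed.

Lemma pw_hom (S T : fsg) (f : S -> T) (x : S) k : hom f -> f (pw x k) = pw (f x) k.
Proof. move=> fh; elim: k => [|k IH] //=; by rewrite fh -/(pw x k) IH. Qed.

Lemma pw_prod (S T : fsg) (x : prod_fsg S T) k : pw x k = (pw x.1 k, pw x.2 k).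
Proof.
elim: k => [|k IH]; first by case: x.
by rewrite /= -/(pw x k) IH.
Qed.

Lemma omega_pv k : pseudovariety (omega_plus_eq k).
Proof.
split.
- move=> x e _ _; case: (fsg_op _ _); by case: (spow x k).
- move=> S T HS HT x e [m m0 He] Hee.
  have E : forall k', spow x k' = (spow x.1 k', spow x.2 k').
    move=> k'; exact: pw_prod.
  rewrite He E in Hee *.
  have H1 := f_equal fst Hee; have H2 := f_equal snd Hee.
  rewrite E /= /prod_op /=.
  rewrite (HS x.1 (spow x.1 m)) //; last by exists m.
  rewrite (HT x.2 (spow x.2 m)) //; by exists m.
- move=> S T f fh finj HS x e [m m0 He] Hee.
  apply: finj; rewrite fh.
  change (spow x k) with (pw x k.-1); rewrite pw_hom //.
  have Hfe : f e = spow (f x) m by rewrite He; exact: pw_hom.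
  apply: (HS (f x) (f e)); first by exists m.
  by rewrite -fh Hee.
- move=> S T f fh fs HS y e [m m0 He] Hee.
  case: (fs y) => x fx.
  case: (pw_idem_exists x) => a Ha.
  have H1 : fsg_op (pw x a) (pw x k.-1) = pw x k.-1.
    apply: (HS x (pw x a) _ Ha); by exists a.+1.
  have H2 := congr1 f H1; rewrite fh !(pw_hom _ _ fh) fx in H2.
  have Ha' := congr1 f Ha; rewrite fh !(pw_hom _ _ fh) fx in Ha'.
  have Ee : e = pw y a.
    rewrite He; case: m m0 He => // m' _ He.
    apply: idem_pow_eq => //; move: Hee; by rewrite He.
  by rewrite Ee.
Qed.

Lemma N_pw k c : val (pw (ord0 : N k.+2) c) = minn c k.+1.
Proof.
elim: c => [|c IH] /=; first lia.
rewrite -/(pw (ord0 : N k.+2) c) IH; lia.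
Qed.

Lemma N_not_omega k : ~ omega_plus_eq k.+1 (N k.+2).
Proof.
move=> H.
have := H ord0 (pw (ord0 : N k.+2) k.+1).
have Hi : fsg_op (pw (ord0 : N k.+2) k.+1) (pw (ord0 : N k.+2) k.+1) = pw (ord0 : N k.+2) k.+1.
  apply: val_inj; rewrite /= N_pw; lia.
move=> /(_ (ex_intro2 _ _ k.+2 erefl erefl) Hi) /(congr1 val) /=.
rewrite -/(pw (ord0 : N k.+2) k) !N_pw; lia.
Qed.

Section Sub.
Variables (T : fsg) (P : pred T).
Hypothesis Pop : forall y z, P y -> P z -> P (fsg_op y z).
Definition sub_op (u v : {y : T | P y}) : {y : T | P y} :=
  exist _ (fsg_op (val u) (val v)) (Pop (valP u) (valP v)).
Lemma sub_op_assoc : associative sub_op.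
Proof. move=> u v w; apply: val_inj => /=; exact: fsg_assoc. Qed.
Definition sub_fsg := @FSG {y : T | P y} _ sub_op_assoc.
Lemma sub_val_hom : hom (fun u : sub_fsg => val u).
Proof. by []. Qed.
End Sub.

Lemma L3 k (T : fsg) : ~ omega_plus_eq k.+1 T -> gen T (N k.+2).
Proof.
move=> H; apply: NNPP => nG; apply: H => x e [m m0 He] Hee.
apply: NNPP => Hne; apply: nG.
case: m m0 He => // m' _ He.
have He' : e = pw x m' := He.
have key : forall j c, j <= k -> j < c -> pw x j <> pw x c.
  move=> j c jk jc E; apply: Hne.
  have P0 : pw x j = pw x (j + (c - j)) by rewrite subnKC // ltnW.
  have Pk := @pw_period _ x j (c - j) P0 k m'.+1 jk.
  change (spow x k.+1) with (pw x k).
  rewrite He' in Hee *.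
  rewrite -{1}(pw_idem (c - j).-1 Hee) pw_pw pwD Pk; congr (pw x _); nia.
have [i0 [dd [d0 idS Hid]]] := pw_pigeon x.
pose P : pred T := fun y => [exists c : 'I_#|T|, pw x c == y].
have Ppw : forall c, P (pw x c).
  move=> c; have [c' lt E] := pw_reduce d0 Hid c.
  apply/existsP; exists (Ordinal (leq_trans lt idS)); by rewrite /= E.
have Pex : forall y, P y -> exists c, y = pw x c.
  by move=> y /existsP [c /eqP <-]; exists c.
have Pop : forall y z, P y -> P z -> P (fsg_op y z).
  move=> y z /Pex [a ->] /Pex [b ->]; by rewrite pwD.
pose g (u : sub_fsg Pop) : N k.+2 :=
  match [pick i : 'I_k.+2 | (i < k.+1) && (pw x i == val u)] with
  | Some i => i | None => ord_max end.
have gpw : forall c (u : sub_fsg Pop), val u = pw x c -> val (g u) = minn c k.+1.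
  move=> c u Eu; rewrite /g; case: pickP => [i /andP [ik /eqP E] | none] /=.
  - rewrite Eu in E; case: (ltngtP i c) => ic.
    + by case: (key i c ltac:(lia) ic).
    + by case: (key c i ltac:(lia) ic); rewrite E.
    + lia.
  - case: (leqP c k) => ck; last lia.
    have := none (inord c); rewrite inordK; last lia.
    by rewrite ltnS ck Eu eqxx.
have ghom : hom g.
  move=> u v; apply: val_inj.
  have [a Ea] := Pex _ (valP u); have [b Eb] := Pex _ (valP v).
  rewrite (gpw (a + b).+1); last by rewrite /= Ea Eb pwD.
  rewrite /= (gpw a u Ea) (gpw b v Eb); lia.
have gsurj : forall y, exists u, g u = y.
  move=> y; exists (exist _ (pw x y) (Ppw y)); apply: val_inj.
  rewrite (gpw y) //=; have := ltn_ord y; lia.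
move=> V [V1 Vprod Vsub Vimg] VT.
apply: (Vimg _ _ g ghom gsurj).
apply: (Vsub T (sub_fsg Pop) _ (@sub_val_hom T P Pop) val_inj VT).
Qed.

Theorem theorem5p7 (n : nat) : 2 <= n ->
  join_irreducible (gen (N n)) /\
  (forall T : fsg, Excl (N n) T <-> omega_plus_eq (n - 1) T).
Proof.
case: n => [|[|k]] // _.
have -> : k.+2 - 1 = k.+1 by rewrite subn1.
have Om := omega_pv k.+1.
have NotN := @N_not_omega k.
have ExclE : forall T, Excl (N k.+2) T <-> omega_plus_eq k.+1 T.
  move=> T; split.
  - move=> HE; apply: NNPP => HO; exact: HE (L3 HO).
  - move=> HO Hg; apply: NotN; exact: Hg _ Om HO.
split; last exact: ExclE.
move=> X Xpv Hsub.
apply: NNPP => Hno.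
have HW : forall W, X W -> subclass W (omega_plus_eq k.+1).
  move=> W XW T WT; apply/ExclE => Hg.
  apply: Hno; exists W => //.
  move=> S HS; apply: HS (Xpv W XW) _; exact: Hg _ (Xpv W XW) WT.
apply: NotN.
have : join X (N k.+2) by apply: Hsub => V _.
by move=> /(_ _ Om HW).
Qed.
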